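(* Let $\alpha$ be a unit speed Frenet curve in $\mathbb{E}^3$ with Frenet frame $\{T,N,B\}$, curvature $\kappa$ and torsion $\tau$, let $\beta$ be an osculating mate of $\alpha$, let $\theta(s)=\int\kappa ds$ be the antiderivative of $\kappa$ with $\beta'=\sin\theta\,T+\cos\theta\,N$, and let $d(s)=\|\beta(s)\|$ be the distance function of $\beta$. Then the position vector of $\beta$ is $$\beta=\left[\int\left(-\frac{\kappa}{\tau}h'+\sin\theta\right)ds\right]T-\frac{h'}{\tau}N+hB,\qquad\text{where } h(s)=\frac{(dd')'-1}{\tau\cos\theta}$$ (for a suitable antiderivative in the first coefficient).
   Context: $\alpha:I\to\mathbb{E}^3$ is parametrized by arclength $s$, with $T'=\kappa N$, $N'=-\kappa T+\tau B$, $B'=-\tau N$, $\kappa>0$. An osculating mate of $\alpha$ is a curve $\beta(s)=\int(x_1T+x_2N)ds$ with smooth $x_1,x_2$, $x_1^2+x_2^2=1$ and $\beta''\perp\mathrm{span}\{T,N\}$; $\beta$ is assumed to be a Frenet curve (so $\tau\cos\theta\neq0$). The prime denotes $d/ds$. *)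

(* Defs.v *)
From Stdlib Require Import Reals.
From Coquelicot Require Import Coquelicot.
Open Scope R_scope.

Record vec3 := V3 { vx : R; vy : R; vz : R }.

Definition vadd (u v : vec3) : vec3 := V3 (vx u + vx v) (vy u + vy v) (vz u + vz v).
Definition vscale (a : R) (v : vec3) : vec3 := V3 (a * vx v) (a * vy v) (a * vz v).
Definition dot (u v : vec3) : R := vx u * vx v + vy u * vy v + vz u * vz v.
Definition vnorm (v : vec3) : R := sqrt (dot v v).
Definition cross (u v : vec3) : vec3 :=
  V3 (vy u * vz v - vz u * vy v) (vz u * vx v - vx u * vz v) (vx u * vy v - vy u * vx v).

Definition in_interval (lo hi : Rbar) (s : R) : Prop :=
  Rbar_lt lo (Finite s) /\ Rbar_lt (Finite s) hi.

Definition vis_derive (f : R -> vec3) (s : R) (v : vec3) : Prop :=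
  is_derive (fun t => vx (f t)) s (vx v) /\
  is_derive (fun t => vy (f t)) s (vy v) /\
  is_derive (fun t => vz (f t)) s (vz v).

Definition vDerive (f : R -> vec3) (s : R) : vec3 :=
  V3 (Derive (fun t => vx (f t)) s) (Derive (fun t => vy (f t)) s) (Derive (fun t => vz (f t)) s).

Definition smooth_on (I : R -> Prop) (f : R -> R) : Prop :=
  forall (n : nat) (s : R), I s -> ex_derive_n f n s.

Definition vsmooth_on (I : R -> Prop) (f : R -> vec3) : Prop :=
  smooth_on I (fun t => vx (f t)) /\ smooth_on I (fun t => vy (f t)) /\
  smooth_on I (fun t => vz (f t)).

Definition frenet_curve (I : R -> Prop) (alpha T N B : R -> vec3) (kappa tau : R -> R) : Prop :=
  vsmooth_on I alpha /\ vsmooth_on I T /\ vsmooth_on I N /\ vsmooth_on I B /\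
  smooth_on I kappa /\ smooth_on I tau /\
  forall s, I s ->
    vis_derive alpha s (T s) /\
    dot (T s) (T s) = 1 /\ dot (N s) (N s) = 1 /\ dot (B s) (B s) = 1 /\
    dot (T s) (N s) = 0 /\ dot (T s) (B s) = 0 /\ dot (N s) (B s) = 0 /\
    B s = cross (T s) (N s) /\
    0 < kappa s /\
    vis_derive T s (vscale (kappa s) (N s)) /\
    vis_derive N s (vadd (vscale (- kappa s) (T s)) (vscale (tau s) (B s))) /\
    vis_derive B s (vscale (- tau s) (N s)).

Definition osculating_mate (I : R -> Prop) (T N : R -> vec3) (beta : R -> vec3) : Prop :=
  vsmooth_on I beta /\
  exists x1 x2 : R -> R,
    smooth_on I x1 /\ smooth_on I x2 /\
    forall s, I s ->
      x1 s ^ 2 + x2 s ^ 2 = 1 /\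
      vis_derive beta s (vadd (vscale (x1 s) (T s)) (vscale (x2 s) (N s))) /\
      dot (vDerive (vDerive beta) s) (T s) = 0 /\
      dot (vDerive (vDerive beta) s) (N s) = 0.

(* Main.v *)
Require Import Defs.
From Stdlib Require Import Reals.
From Coquelicot Require Import Coquelicot.
Open Scope R_scope.
From Stdlib Require Import Lra Psatz.
Lemma isd_mult (f g : R -> R) (x df dg : R) : is_derive f x df -> is_derive g x dg ->
  is_derive (fun t => f t * g t) x (df * g x + f x * dg).
Proof. intros H1 H2; apply is_derive_Reals; apply is_derive_Reals in H1, H2.
  exact (derivable_pt_lim_mult f g x df dg H1 H2). Qed.

Lemma isd_plus (f g : R -> R) (x df dg : R) : is_derive f x df -> is_derive g x dg ->
  is_derive (fun t => f t + g t) x (df + dg).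
Proof. intros H1 H2; apply is_derive_Reals; apply is_derive_Reals in H1, H2.
  exact (derivable_pt_lim_plus f g x df dg H1 H2). Qed.

Lemma isd_val (f : R -> R) (x l l0 : R) : is_derive f x l -> l = l0 -> is_derive f x l0.
Proof. intros H ->; exact H. Qed.

Lemma dot_derive u v s u' v' : vis_derive u s u' -> vis_derive v s v' ->
  is_derive (fun t => dot (u t) (v t)) s (dot u' (v s) + dot (u s) v').
Proof.
  intros [H1 [H2 H3]] [G1 [G2 G3]]. unfold dot.
  eapply isd_val.
  apply isd_plus; [apply isd_plus|]; apply isd_mult; eauto.
  simpl. ring.
Qed.

Lemma vis_val f s v w : vis_derive f s v -> vx v = vx w -> vy v = vy w -> vz v = vz w ->
  vis_derive f s w.
Proof. intros [H1 [H2 H3]] e1 e2 e3. rewrite e1, e2, e3 in *. split; [|split]; auto. Qed.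

Lemma vscale_derive (f : R -> R) v s f' v' : is_derive f s f' -> vis_derive v s v' ->
  vis_derive (fun t => vscale (f t) (v t)) s (vadd (vscale f' (v s)) (vscale (f s) v')).
Proof. intros Hf [H1 [H2 H3]]. split; [|split]; simpl; apply isd_mult; auto. Qed.

Lemma vadd_derive u v s u' v' : vis_derive u s u' -> vis_derive v s v' ->
  vis_derive (fun t => vadd (u t) (v t)) s (vadd u' v').
Proof. intros [H1 [H2 H3]] [G1 [G2 G3]]. split; [|split]; simpl; apply isd_plus; auto. Qed.

Lemma dot_addl u v w : dot (vadd u v) w = dot u w + dot v w.
Proof. destruct u, v, w; unfold dot; simpl; ring. Qed.
Lemma dot_addr u v w : dot w (vadd u v) = dot w u + dot w v.
Proof. destruct u, v, w; unfold dot; simpl; ring. Qed.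
Lemma dot_scalel a u w : dot (vscale a u) w = a * dot u w.
Proof. destruct u, w; unfold dot; simpl; ring. Qed.
Lemma dot_scaler a u w : dot w (vscale a u) = a * dot w u.
Proof. destruct u, w; unfold dot; simpl; ring. Qed.
Lemma dot_comm u w : dot u w = dot w u.
Proof. destruct u, w; unfold dot; simpl; ring. Qed.

Lemma lagrange u v : dot (cross u v) (cross u v) + (dot u v)^2 = dot u u * dot v v.
Proof. destruct u, v; unfold dot, cross; simpl; ring. Qed.
Lemma triple u T N : cross u (cross T N) = vadd (vscale (dot u N) T) (vscale (- dot u T) N).
Proof. destruct u, T, N; unfold dot, cross, vadd, vscale; simpl; f_equal; ring. Qed.

Lemma zero_vec w T N : dot T T = 1 -> dot N N = 1 -> dot T N = 0 -> dot w T = 0 ->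
  dot w N = 0 -> dot w (cross T N) = 0 -> w = V3 0 0 0.
Proof.
  intros HT HN HTN H1 H2 H3.
  assert (BB : dot (cross T N) (cross T N) = 1).
  { pose proof (lagrange T N) as L. rewrite HT, HN, HTN in L. lra. }
  pose proof (lagrange w (cross T N)) as L.
  rewrite triple, H1, H2, H3, BB in L.
  assert (E : dot w w = 0).
  { assert (Z : dot (vadd (vscale 0 T) (vscale (- 0) N)) (vadd (vscale 0 T) (vscale (- 0) N)) = 0)
      by (destruct T, N; unfold dot, vadd, vscale; simpl; ring).
    rewrite Z in L. lra. }
  destruct w as [a b c]; unfold dot in E; simpl in E.
  assert (a = 0) by nra. assert (b = 0) by nra. assert (c = 0) by nra. subst; reflexivity.
Qed.

Lemma decomp v T N B : dot T T = 1 -> dot N N = 1 -> dot T N = 0 -> dot T B = 0 ->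
  dot N B = 0 -> dot B B = 1 -> B = cross T N ->
  v = vadd (vscale (dot v T) T) (vadd (vscale (dot v N) N) (vscale (dot v B) B)).
Proof.
  intros HT HN HTN HTB HNB HB EB.
  set (R0 := vadd (vscale (dot v T) T) (vadd (vscale (dot v N) N) (vscale (dot v B) B))).
  set (w := vadd v (vscale (-1) R0)).
  assert (HR : forall z, dot w z = dot v z - dot R0 z).
  { intro z. unfold w. rewrite dot_addl, dot_scalel. ring. }
  assert (HNT : dot N T = 0) by (rewrite dot_comm; auto).
  assert (HBT : dot B T = 0) by (rewrite dot_comm; auto).
  assert (HBN : dot B N = 0) by (rewrite dot_comm; auto).
  assert (Hw : w = V3 0 0 0).
  { apply (zero_vec w T N); auto; rewrite <- ?EB, HR; unfold R0;
    rewrite ?dot_addl, ?dot_scalel, ?HT, ?HN, ?HTN, ?HTB, ?HNB, ?HB, ?HNT, ?HBT, ?HBN; ring. }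
  assert (E : forall a b : vec3, vadd a (vscale (-1) b) = V3 0 0 0 -> a = b).
  { intros [a1 a2 a3] [b1 b2 b3] H. unfold vadd, vscale in H; simpl in H.
    injection H as H1 H2 H3. f_equal; lra. }
  exact (E _ _ Hw).
Qed.

Lemma interval_open lo hi s : in_interval lo hi s -> locally s (in_interval lo hi).
Proof.
  intro H. apply (open_and (T:=R_UniformSpace) (fun u : R => Rbar_lt lo u) (fun u : R => Rbar_lt u hi)); auto.
  apply open_Rbar_gt. apply open_Rbar_lt.
Qed.

Lemma isd_sin (th : R -> R) s k : is_derive th s k ->
  is_derive (fun t => sin (th t)) s (k * cos (th s)).
Proof. intro H. eapply isd_val. apply (is_derive_comp sin th); [apply is_derive_sin | exact H].
  reflexivity. Qed.
Lemma isd_cos (th : R -> R) s k : is_derive th s k ->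
  is_derive (fun t => cos (th t)) s (k * - sin (th s)).
Proof. intro H. eapply isd_val. apply (is_derive_comp cos th); [apply is_derive_cos | exact H].
  reflexivity. Qed.

Theorem theorem8 (lo hi : Rbar) (alpha T N B beta : R -> vec3)
  (kappa tau theta : R -> R) :
  frenet_curve (in_interval lo hi) alpha T N B kappa tau ->
  osculating_mate (in_interval lo hi) T N beta ->
  (* theta is an antiderivative of kappa with beta' = sin theta T + cos theta N *)
  (forall s, in_interval lo hi s -> is_derive theta s (kappa s)) ->
  (forall s, in_interval lo hi s ->
     vis_derive beta s (vadd (vscale (sin (theta s)) (T s)) (vscale (cos (theta s)) (N s)))) ->
  (* beta is a Frenet curve *)
  (forall s, in_interval lo hi s -> tau s * cos (theta s) <> 0) ->
  let d := fun s => vnorm (beta s) in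
  let h := fun s => (Derive (fun t => d t * Derive d t) s - 1) / (tau s * cos (theta s)) in
  exists a : R -> R,
    (forall s, in_interval lo hi s ->
       is_derive a s (- (kappa s / tau s) * Derive h s + sin (theta s))) /\
    (forall s, in_interval lo hi s ->
       beta s = vadd (vscale (a s) (T s))
                  (vadd (vscale (- (Derive h s / tau s)) (N s)) (vscale (h s) (B s)))).
Proof.
  intros Hfr _ Hth Hbeta Htc d h.
  destruct Hfr as [_ [_ [_ [_ [_ [_ Hf]]]]]].
  set (I := in_interval lo hi) in *.
  set (P := fun t => vadd (vscale (sin (theta t)) (T t)) (vscale (cos (theta t)) (N t))).
  assert (Htau : forall s, I s -> tau s <> 0).
  { intros s Hs E. apply (Htc s Hs). rewrite E; ring. }
  assert (SA : forall s, I s -> vis_derive P s (vscale (tau s * cos (theta s)) (B s))).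
  { intros s Hs.
    destruct (Hf s Hs) as (_ & _ & _ & _ & _ & _ & _ & _ & _ & HT & HN & _).
    eapply vis_val.
    apply vadd_derive; apply vscale_derive;
      [apply isd_sin, Hth, Hs | exact HT | apply isd_cos, Hth, Hs | exact HN].
    all: simpl; ring. }
  assert (SB : forall t, I t -> d t * Derive d t = dot (beta t) (P t)).
  { intros t Ht. unfold d, vnorm.
    assert (Hpos : 0 <= dot (beta t) (beta t)).
    { destruct (beta t); unfold dot; simpl; nra. }
    destruct (Rle_lt_or_eq_dec _ _ Hpos) as [Hlt | Heq].
    - assert (Hd : is_derive (fun s => sqrt (dot (beta s) (beta s))) t
               ((dot (P t) (beta t) + dot (beta t) (P t)) * / (2 * sqrt (dot (beta t) (beta t))))).
      { eapply isd_val.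
        apply (is_derive_comp sqrt (fun s => dot (beta s) (beta s))).
        - apply is_derive_Reals. apply derivable_pt_lim_sqrt. exact Hlt.
        - apply dot_derive; apply Hbeta; exact Ht.
        - simpl. unfold scal; simpl. unfold mult; simpl. reflexivity. }
      replace (Derive _ t) with ((dot (P t) (beta t) + dot (beta t) (P t)) * / (2 * sqrt (dot (beta t) (beta t)))) by (symmetry; apply (is_derive_unique _ _ _ Hd)).
      rewrite (dot_comm (P t) (beta t)).
      pose proof (sqrt_lt_R0 _ Hlt).
      field. lra.
    - rewrite <- Heq, sqrt_0. 
      assert (E : forall v w : vec3, dot v v = 0 -> 0 = dot v w).
      { intros [a b c] [x y z] H0. unfold dot in *; simpl in *.
        assert (a = 0) by nra. assert (b = 0) by nra. assert (c = 0) by nra.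
        subst; ring. }
      rewrite <- (E (beta t) (P t)); [ring | auto]. }
  assert (SC : forall s, I s -> Derive (fun t => d t * Derive d t) s
                                = 1 + tau s * cos (theta s) * dot (beta s) (B s)).
  { intros s Hs. apply is_derive_unique.
    apply is_derive_ext_loc with (f := fun t => dot (beta t) (P t)).
    { apply filter_imp with (P := I); [| apply interval_open; exact Hs].
      intros t Ht. symmetry. apply SB; exact Ht. }
    eapply isd_val. apply dot_derive; [apply Hbeta, Hs | apply SA, Hs].
    destruct (Hf s Hs) as (_ & HTT & HNN & _ & HTN & _).
    unfold P. rewrite ?dot_addl, ?dot_addr, ?dot_scalel, ?dot_scaler.
    rewrite (dot_comm (N s) (T s)), HTT, HNN, HTN.
    pose proof (sin2_cos2 (theta s)) as SC. unfold Rsqr in SC. nra. }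
  assert (SD : forall s, I s -> h s = dot (beta s) (B s)).
  { intros s Hs. unfold h. rewrite SC by exact Hs. pose proof (Htc s Hs) as Hc. field. split; intro E; apply Hc; rewrite E; ring. }
  assert (SE : forall s, I s -> Derive h s = - tau s * dot (beta s) (N s)).
  { intros s Hs. apply is_derive_unique.
    apply is_derive_ext_loc with (f := fun t => dot (beta t) (B t)).
    { apply filter_imp with (P := I); [| apply interval_open; exact Hs].
      intros t Ht. symmetry. apply SD; exact Ht. }
    destruct (Hf s Hs) as (_ & HTT & HNN & HBB & HTN & HTB & HNB & _ & _ & _ & _ & HB).
    eapply isd_val. apply dot_derive; [apply Hbeta, Hs | exact HB].
    rewrite ?dot_addl, ?dot_scalel, ?dot_scaler, HTB, HNB. ring. }
  exists (fun t => dot (beta t) (T t)). split.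
  - intros s Hs.
    destruct (Hf s Hs) as (_ & HTT & HNN & HBB & HTN & HTB & HNB & _ & _ & HT & _).
    eapply isd_val. apply dot_derive; [apply Hbeta, Hs | exact HT].
    rewrite SE by exact Hs.
    rewrite ?dot_addl, ?dot_scalel, ?dot_scaler, HTT, (dot_comm (N s) (T s)), HTN.
    field. apply Htau, Hs.
  - intros s Hs.
    destruct (Hf s Hs) as (_ & HTT & HNN & HBB & HTN & HTB & HNB & EB & _).
    rewrite SE, SD by exact Hs.
    replace (- (- tau s * dot (beta s) (N s) / tau s)) with (dot (beta s) (N s))
      by (field; apply Htau, Hs).
    apply decomp; auto.
Qed.
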